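(* Let $n \ge 2$ and let $(G(k))_{k \in \mathbb{N}}$, $G(k)=(\mathcal{V},\mathcal{E}(k))$, be a sequence of digraphs on $\mathcal{V}=\{1,\dots,n\}$, with knowledge sets $\mathcal{K}_i(k)$ evolving by the flooding update described in the context. Fix a node $q \in \mathcal{V}$. Suppose that for every $k \in \{0,1,\dots,n-2\}$ there exists an input-cord $\mathcal{I}^q(k)$ to node $q$ at time $k$ with $|\mathcal{I}^q(k)| \ge n-k-1$. Then $|\mathcal{K}_q(k+1)| \ge k+2$ for every $k \in \{0,1,\dots,n-2\}$.
   Context: Network: $\mathcal{V}=\{1,\dots,n\}$; each node $i$ holds initial data $d_i \in \mathbb{R}$, with $d_i \neq d_j$ for $i\neq j$. Communication happens at discrete times $k \in \mathbb{N}$ along a time-varying digraph $G(k)=(\mathcal{V},\mathcal{E}(k))$; node $i$ sends to node $j$ at time $k$ iff $(i,j)\in\mathcal{E}(k)$. Knowledge sets: $\mathcal{K}_i(0)=\{d_i\}$, and (flooding update) each node's knowledge at time $k+1$ is its knowledge at time $k$ together with the full knowledge at time $k$ of every node sending to it: $\mathcal{K}_j(k+1)=\mathcal{K}_j(k)\cup\bigcup_{i:(i,j)\in\mathcal{E}(k)}\mathcal{K}_i(k)$. Input-cord: for a node $i$ and time $k$, an input-cord to $i$ is an ordered list $\mathcal{I}^i(k)=(\mathcal{I}^i_1(k),\dots,\mathcal{I}^i_m(k))$ of pairwise distinct nodes of $\mathcal{V}\setminus\{i\}$ such that $(\mathcal{I}^i_j(k),\mathcal{I}^i_{j+1}(k))\in\mathcal{E}(k)$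 for all $j\in\{1,\dots,m-1\}$ and $(\mathcal{I}^i_m(k),i)\in\mathcal{E}(k)$; its cardinality is $|\mathcal{I}^i(k)|=m$. *)

(* Defs.v *)
From HB Require Import structures.
From mathcomp Require Import all_boot all_order all_algebra.
From mathcomp Require Import finmap.
From mathcomp Require Import reals.
Set Implicit Arguments. Unset Strict Implicit. Unset Printing Implicit Defensive.
Local Open Scope fset_scope.

(* Nodes are 'I_n (i.e. {1..n} shifted to {0..n-1}).
   A time-varying digraph is E : nat -> rel 'I_n, with
   E k i j  <=>  (i,j) \in E(k)  (node i sends to node j at time k). *)

Fixpoint knowledge (R : realType) (n : nat) (E : nat -> rel 'I_n)
    (d : 'I_n -> R) (k : nat) (j : 'I_n) : {fset R} :=
  match k with
  | 0 => [fset d j]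
  | k'.+1 => knowledge E d k' j
             `|` \bigcup_(i <- enum 'I_n | E k' i j) knowledge E d k' i
  end.

(* s = (I_1, ..., I_m) is an input-cord to node i at time k:
   pairwise distinct nodes of V \ {i}, with (I_j, I_{j+1}) \in E(k)
   and (I_m, i) \in E(k); i.e. the sequence s followed by i is an E(k)-path. *)
Definition input_cord (n : nat) (E : nat -> rel 'I_n) (k : nat) (i : 'I_n)
    (s : seq 'I_n) : bool :=
  [&& uniq s, i \notin s & sorted (E k) (rcons s i)].

(* Main.v *)
Require Import Defs.
From HB Require Import structures.
From mathcomp Require Import all_boot all_order all_algebra.
From mathcomp Require Import finmap.
From mathcomp Require Import reals.
From mathcomp Require Import zify.
Local Open Scope fset_scope.
Set Implicit Arguments. Unset Strict Implicit.

Fixpoint Rb (n : nat) (E : nat -> rel 'I_n) (q : 'I_n) (k s : nat) : {set 'I_n} :=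
  match s with
  | 0 => [set q]
  | s'.+1 => (Rb E q k s' :|: [set j | [exists i in Rb E q k s', E (k - s') j i]])%SET
  end.

Lemma know_mono (R : realType) n (E : nat -> rel 'I_n) (d : 'I_n -> R) t j :
  knowledge E d t j `<=` knowledge E d t.+1 j.
Proof. by rewrite /= fsubsetUl. Qed.

Lemma know_edge (R : realType) n (E : nat -> rel 'I_n) (d : 'I_n -> R) t i j :
  E t i j -> knowledge E d t i `<=` knowledge E d t.+1 j.
Proof.
move=> Hij /=; apply: fsubset_trans (fsubsetUr _ _).
by apply: bigfcup_sup => //; rewrite mem_enum.
Qed.

Lemma know_Rb (R : realType) n (E : nat -> rel 'I_n) (d : 'I_n -> R) q k s :
  (s <= k.+1)%N -> forall j, j \in Rb E q k s ->
  knowledge E d (k.+1 - s) j `<=` knowledge E d k.+1 q.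
Proof.
elim: s => [|s IH] Hs j /=.
  by rewrite in_set1 ?subn0 => /eqP ->; apply: fsubset_refl.
have Hsk : (s <= k)%N by [].
rewrite subSS in_setU => /orP [Hj|].
  apply: fsubset_trans (know_mono _ _ _ _) _.
  by rewrite -subSn //; apply: IH => //; apply: ltnW.
rewrite in_set => /existsP [i /andP [Hi He]].
apply: fsubset_trans (know_edge _ He) _.
by rewrite -subSn //; apply: IH => //; apply: ltnW.
Qed.

Lemma path_exit (n : nat) (e : rel 'I_n) (A : {set 'I_n}) q (s : seq 'I_n) :
  sorted e (rcons s q) -> q \in A -> (exists2 x, x \in s & x \notin A) ->
  exists x y, [/\ x \notin A, y \in A & e x y].
Proof.
elim: s => [|a s IH] /= Hs0 Hq [x Hx HxA] //.
have Hs' : sorted e (rcons s q).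
  by case: s {IH Hx} Hs0 => //= b s /andP [].
case: (boolP (has (fun z => z \notin A) s)) => [/hasP [z Hz HzA]|Hno].
  by apply: IH => //; exists z.
have HaA : a \notin A.
  move: Hx; rewrite inE => /orP [/eqP <- //|Hx].
  by move/hasPn: Hno => /(_ x Hx); rewrite HxA.
exists a, (head q s); split => //.
  case: s Hno {IH Hx Hs'} Hs0 => //= b s Hno _.
  by move: Hno; rewrite negb_or negbK => /andP [].
by case: s {IH Hx Hno Hs'} Hs0 => [|b s] /= /andP [].
Qed.

Theorem lemma1 (R : realType) (n : nat) (hn : (2 <= n)%N)
    (E : nat -> rel 'I_n) (d : 'I_n -> R) (hd : injective d) (q : 'I_n) :
  (forall k : nat, (k <= n - 2)%N ->
     exists s : seq 'I_n, input_cord E k q s /\ (n - k - 1 <= size s)%N) ->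
  forall k : nat, (k <= n - 2)%N -> (k + 2 <= #|` knowledge E d k.+1 q|)%N.
Proof.
move=> Hc k Hk.
have Hq : forall s, q \in Rb E q k s.
  by elim=> [|s IH] /=; rewrite ?in_set1 // in_setU IH.
have Hsub : forall s, (Rb E q k s \subset Rb E q k s.+1)%SET.
  by move=> s /=; apply: subsetUl.
have Hgrow : forall s, (s <= k)%N ->
    (#|Rb E q k s|.+1 <= #|Rb E q k s.+1|)%N \/ (n - k + s <= #|Rb E q k s|)%N.
  move=> s Hs.
  have Ht : (k - s <= n - 2)%N by apply: leq_trans (leq_subr _ _) Hk.
  have [c [/and3P [Hu Hqc Hsort] Hsz]] := Hc _ Ht.
  case: (boolP (all (fun z => z \in Rb E q k s) c)) => [Hall|Hnall].
    right.
    have Hsubc : {subset q :: c <= enum (Rb E q k s)}.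
      move=> z; rewrite inE mem_enum => /orP [/eqP ->|Hz]; first exact: Hq.
      by move/allP: Hall; apply.
    have := uniq_leq_size _ Hsubc; rewrite /= Hqc Hu => /(_ isT).
    move=> H; rewrite cardE; apply: leq_trans H => /=.
    move: Hsz Hs Hk hn; clear; lia.
  left.
  have [x [y [HxA HyA Hxy]]] : exists x y, [/\ x \notin Rb E q k s, y \in Rb E q k s & E (k - s) x y].
    apply: path_exit Hsort (Hq s) _.
    by move/allPn: Hnall => [z Hz HzA]; exists z.
  apply: proper_card; apply/properP; split; first exact: Hsub.
  exists x => //=; rewrite in_setU in_set; apply/orP; right.
  by apply/existsP; exists y; rewrite HyA.
have Hcard : forall s, (s <= k.+1)%N -> (s.+1 <= #|Rb E q k s|)%N.
  elim=> [|s IH] Hs; first by rewrite cards1.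
  have Hs' : (s <= k)%N by [].
  have IH' := IH (ltnW Hs).
  case: (Hgrow s Hs') => [H|H]; first by apply: leq_trans H; rewrite ltnS.
  apply: leq_trans (subset_leq_card (Hsub s)).
  apply: leq_trans H; lia.
have HK : forall j, j \in Rb E q k k.+1 -> d j \in knowledge E d k.+1 q.
  move=> j Hj; have := know_Rb d (leqnn _) Hj; rewrite subnn /=.
  by move/fsubsetP; apply; rewrite fset11.
have Hsubm : {subset map d (enum (Rb E q k k.+1)) <= enum_fset (knowledge E d k.+1 q)}.
  by move=> z /mapP [j Hj ->]; apply: HK; rewrite -mem_enum.
have := uniq_leq_size _ Hsubm.
rewrite (map_inj_uniq hd) enum_uniq size_map -cardE => /(_ isT).
apply: leq_trans; rewrite addn2; exact: Hcard.
Qed.
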